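(* Consider the mining game with $N\ge2$ miners, costs $0<c_1\le\dots\le c_N$, reward $R>0$ and capacity $\gamma\ge0$, at parameter values where the number $n$ of active miners does not change under small perturbations of the parameters. Let $i\ne j$ be active miners. Then $$\frac{\partial h_i^*}{\partial c_i}=\Delta_{i,1}+\Delta_{i,2}<0,\qquad \frac{\partial h_i^*}{\partial c_j}=\Delta_{i,2},$$ where $\Delta_{i,1}<0$ and $\Delta_{i,2}>0\iff h_i^*/H^*<1/2$. Furthermore, $$\frac{\partial}{\partial c_i}\frac{h_i^*}{H^*}=\widetilde\Delta_{i,1}+\widetilde\Delta_{i,2}<0,\qquad \frac{\partial}{\partial c_j}\frac{h_i^*}{H^*}=\widetilde\Delta_{i,2}>0,$$ where $\widetilde\Delta_{i,1}<0$ and $\widetilde\Delta_{i,2}>0$.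
   Context: Mining game: $N\ge2$ miners with costs-per-hash $0<c_1\le\dots\le c_N$; each miner $i$ chooses $h_i\ge0$, $H=\sum_j h_j$, payoff $\frac{h_i}{H}R-c_ih_i-\frac{\gamma}{2}h_i^2$ if $H>0$ and $0$ if $H=0$, with $R>0$, $\gamma\ge0$. The pure Nash equilibrium $h^*$ is unique; its active miners (those with $h_i^*>0$) are $1,\dots,n$ for some $2\le n\le N$, and with $c^{(n)}=\sum_{i=1}^nc_i$ one has $H^*=g(c_1,\dots,c_n,\gamma,R):=\frac{\sqrt{(c^{(n)})^2+4(n-1)R\gamma}-c^{(n)}}{2\gamma}$ for $\gamma>0$ (and $(n-1)R/c^{(n)}$ for $\gamma=0$), and $h_i^*=f_i(c_i,\gamma,R,H^* )$ for $i\le n$, where $f_i(c,\gamma,R,x):=x\frac{R-cx}{R+\gamma x^2}$. Derivatives are taken of these closed-form expressions with $n$ held fixed. Definitions: $\Delta_{i,1}:=\frac{\partial f_i}{\partial c}(c_i,\gamma,R,H^* )$ (direct effect, fourth argument held fixed) and $\Delta_{i,2}:=\frac{\partial f_i}{\partial x}(c_i,\gamma,R,H^* )\cdot\frac{\partial g}{\partial c_i}$ (indirect effect through $H^*$; note $\partial g/\partial c_i=\partial g/\partial c_j$). Similarly, $\widetilde\Delta_{i,1}$ is the partial derivative of $f_i(c,\gamma,R,x)/x$ in $c$ with $x=H^*$ held fixed, and $\widetilde\Delta_{i,2}:=\frac{\partial}{\partial x}\big(f_i(c_i,\gamma,R,x)/x\big)\big|_{x=H^*}\cdot\frac{\partial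 g}{\partial c_i}$. *)

(* Defs.v *)
(* Miners are indexed 0..N-1 (paper: 1..N). *)
From Stdlib Require Import Reals Lra.
From Coquelicot Require Import Coquelicot.
Open Scope R_scope.

Fixpoint sumR (n : nat) (f : nat -> R) : R :=
  match n with
  | O => 0
  | S m => sumR m f + f m
  end.

Definition upd (v : nat -> R) (i : nat) (t : R) : nat -> R :=
  fun k => if Nat.eqb k i then t else v k.

Definition payoff (N : nat) (c : nat -> R) (Rw gam : R) (h : nat -> R) (i : nat) : R :=
  let H := sumR N h in
  if Rlt_dec 0 H then h i / H * Rw - c i * h i - gam / 2 * (h i) ^ 2 else 0.

Definition is_NE (N : nat) (c : nat -> R) (Rw gam : R) (h : nat -> R) : Prop :=
  (forall k, (k < N)%nat -> 0 <= h k) /\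
  forall i, (i < N)%nat -> forall x, 0 <= x ->
    payoff N c Rw gam (upd h i x) i <= payoff N c Rw gam h i.

Definition gcf (n : nat) (gam Rw C : R) : R :=
  if Req_EM_T gam 0 then (INR n - 1) * Rw / C
  else (sqrt (C ^ 2 + 4 * (INR n - 1) * Rw * gam) - C) / (2 * gam).

Definition fcf (c gam Rw x : R) : R := x * (Rw - c * x) / (Rw + gam * x ^ 2).

(* H* and h_i* as closed-form functions of the cost vector, n held fixed *)
Definition Hstar (n : nat) (gam Rw : R) (c : nat -> R) : R :=
  gcf n gam Rw (sumR n c).
Definition hstar (n : nat) (gam Rw : R) (c : nat -> R) (i : nat) : R :=
  fcf (c i) gam Rw (Hstar n gam Rw c).

Definition Delta1 (n : nat) (gam Rw : R) (c : nat -> R) (i : nat) : R :=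
  Derive (fun t => fcf t gam Rw (Hstar n gam Rw c)) (c i).
Definition dg (n : nat) (gam Rw : R) (c : nat -> R) (i : nat) : R :=
  Derive (fun t => Hstar n gam Rw (upd c i t)) (c i).
Definition Delta2 (n : nat) (gam Rw : R) (c : nat -> R) (i : nat) : R :=
  Derive (fun x => fcf (c i) gam Rw x) (Hstar n gam Rw c) * dg n gam Rw c i.

Definition Delta1t (n : nat) (gam Rw : R) (c : nat -> R) (i : nat) : R :=
  Derive (fun t => fcf t gam Rw (Hstar n gam Rw c) / Hstar n gam Rw c) (c i).
Definition Delta2t (n : nat) (gam Rw : R) (c : nat -> R) (i : nat) : R :=
  Derive (fun x => fcf (c i) gam Rw x / x) (Hstar n gam Rw c) * dg n gam Rw c i.

(* Main.v *)
Require Import Defs.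
From Stdlib Require Import Reals Lra Lia.
From Coquelicot Require Import Coquelicot.
Open Scope R_scope.

Lemma sumR_upd m c i t : sumR m (upd c i t) = sumR m c + (if Nat.ltb i m then t - c i else 0).
Proof.
  induction m as [|m IH]; simpl. ring.
  rewrite IH. unfold upd.
  destruct (Nat.eqb m i) eqn:E.
  - apply Nat.eqb_eq in E; subst i.
    assert (Nat.ltb m m = false) by (apply Nat.ltb_ge; lia).
    assert (Nat.ltb m (S m) = true) by (apply Nat.ltb_lt; lia).
    rewrite H, H0. ring.
  - apply Nat.eqb_neq in E.
    destruct (Nat.ltb i m) eqn:E1; destruct (Nat.ltb i (S m)) eqn:E2; try ring.
    + apply Nat.ltb_lt in E1; apply Nat.ltb_ge in E2; lia.
    + apply Nat.ltb_ge in E1; apply Nat.ltb_lt in E2; lia.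
Qed.

Lemma sumR_ext m f g : (forall k, (k < m)%nat -> f k = g k) -> sumR m f = sumR m g.
Proof.
  induction m; simpl; intros H. reflexivity.
  rewrite IHm by (intros; apply H; lia). rewrite H by lia. reflexivity.
Qed.

Lemma sumR_affine m a b f : sumR m (fun k => a + b * f k) = INR m * a + b * sumR m f.
Proof.
  induction m; simpl sumR. simpl INR. ring. rewrite IHm. rewrite S_INR. ring.
Qed.

Lemma sumR_ge m c i : (forall k, (k < m)%nat -> 0 <= c k) -> (i < m)%nat -> c i <= sumR m c.
Proof.
  induction m; intros H Hi. lia. simpl.
  destruct (Nat.eq_dec i m). subst.
  assert (0 <= sumR m c). { clear IHm Hi. induction m. simpl; lra. simpl.
    assert (0 <= c m) by (apply H; lia). assert (0 <= sumR m c) by (apply IHm; intros; apply H; lia). lra. }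
  lra.
  assert (c i <= sumR m c) by (apply IHm; [intros; apply H; lia| lia]).
  assert (0 <= c m) by (apply H; lia). lra.
Qed.

Lemma sumR_ge2 m c i j : (forall k, (k < m)%nat -> 0 <= c k) -> (i < m)%nat -> (j < m)%nat -> i <> j ->
  c i + c j <= sumR m c.
Proof.
  induction m; intros H Hi Hj Hij. lia. simpl.
  assert (H0 : forall k, (k < m)%nat -> 0 <= c k) by (intros; apply H; lia).
  destruct (Nat.eq_dec i m). subst.
  assert (c j <= sumR m c) by (apply sumR_ge; auto; lia). lra.
  destruct (Nat.eq_dec j m). subst.
  assert (c i <= sumR m c) by (apply sumR_ge; auto; lia). lra.
  assert (c i + c j <= sumR m c) by (apply IHm; auto; lia).
  assert (0 <= c m) by (apply H; lia). lra.
Qed.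

Lemma sumR_tail n h d : (forall k, (n <= k < n + d)%nat -> h k = 0) -> sumR (n + d) h = sumR n h.
Proof.
  induction d; intros H. rewrite Nat.add_0_r; reflexivity.
  rewrite Nat.add_succ_r. simpl. rewrite IHd by (intros; apply H; lia). rewrite H by lia. ring.
Qed.

Lemma cpos N c : (0 < c 0%nat) -> (forall k, (S k < N)%nat -> c k <= c (S k)) ->
  forall k, (k < N)%nat -> 0 < c k.
Proof.
  intros H0 Hm k. induction k; intros Hk. auto.
  assert (c k <= c (S k)) by (apply Hm; auto). assert (0 < c k) by (apply IHk; lia). lra.
Qed.

Lemma foc (A ck gam Rw hk : R) : 0 < A -> 0 < hk ->
  (forall x, 0 < x -> x / (A + x) * Rw - ck * x - gam / 2 * x ^ 2 <= hk / (A + hk) * Rw - ck * hk - gam / 2 * hk ^ 2) ->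
  Rw * A / (A + hk)^2 - ck - gam * hk = 0.
Proof.
  intros HA Hh Hmax.
  set (phi := fun x => x / (A + x) * Rw - ck * x - gam / 2 * x ^ 2).
  assert (D : is_derive phi hk (Rw * A / (A + hk)^2 - ck - gam * hk)).
  { unfold phi. auto_derive. lra. field. lra. }
  apply is_derive_Reals in D.
  pose (pr := exist (fun l => derivable_pt_lim phi hk l) _ D : derivable_pt phi hk).
  change (Rw * A / (A + hk)^2 - ck - gam * hk) with (derive_pt phi hk pr).
  apply (deriv_maximum phi 0 (hk + 1) hk pr); try lra.
  intros x H1 H2. apply Hmax; auto.
Qed.

Lemma ne_facts N n c Rw gam h :
  (2 <= N)%nat ->
  0 < c 0%nat ->
  (forall k, (S k < N)%nat -> c k <= c (S k)) ->
  0 < Rw -> 0 <= gam ->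
  is_NE N c Rw gam h ->
  (2 <= n <= N)%nat ->
  (forall k, (k < N)%nat -> (0 < h k <-> (k < n)%nat)) ->
  0 < sumR N h /\
  (forall k, (k < n)%nat -> h k * (Rw + gam * (sumR N h)^2) = sumR N h * (Rw - c k * sumR N h)) /\
  gcf n gam Rw (sumR n c) = sumR N h /\
  sumR n c * sumR N h = (INR n - 1) * Rw - gam * (sumR N h)^2.
Proof.
  intros HN Hc0 Hmono HR Hg [Hnn Hopt] Hn Hact.
  assert (Hcp := cpos N c Hc0 Hmono).
  assert (Hhp : forall k, (k < n)%nat -> 0 < h k) by (intros; apply Hact; lia).
  assert (Hz : forall k, (n <= k < N)%nat -> h k = 0).
  { intros k Hk. assert (0 <= h k) by (apply Hnn; lia).
    destruct (Rlt_dec 0 (h k)) as [r|r]. apply Hact in r; lia. lra. }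
  assert (HsN : sumR N h = sumR n h).
  { replace N with (n + (N - n))%nat by lia. apply sumR_tail. intros; apply Hz; lia. }
  set (H := sumR N h) in *.
  assert (Hpos2 : forall k m, (k < n)%nat -> (m < n)%nat -> k <> m -> h k + h m <= H).
  { intros k m Hk Hm Hkm. apply sumR_ge2; auto; try lia. }
  assert (HH : 0 < H).
  { assert (h 0%nat + h 1%nat <= H) by (apply Hpos2; lia).
    assert (0 < h 0%nat) by (apply Hhp; lia). assert (0 < h 1%nat) by (apply Hhp; lia). lra. }
  assert (Hfoc : forall k, (k < n)%nat -> Rw * (H - h k) / H^2 - c k - gam * h k = 0).
  { intros k Hk.
    assert (HA : 0 < H - h k).
    { destruct (Nat.eq_dec k 0) as [e|e].
      - subst k. assert (h 0%nat + h 1%nat <= H) by (apply Hpos2; lia).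
        assert (0 < h 1%nat) by (apply Hhp; lia). lra.
      - assert (h k + h 0%nat <= H) by (apply Hpos2; lia).
        assert (0 < h 0%nat) by (apply Hhp; lia). lra. }
    assert (E : H = H - h k + h k) by ring.
    rewrite E at 2.
    apply foc; auto.
    intros x Hx. replace (H - h k + h k) with H by ring.
    assert (P := Hopt k ltac:(lia) x ltac:(lra)).
    unfold payoff in P.
    rewrite sumR_upd in P.
    assert (Nat.ltb k N = true) by (apply Nat.ltb_lt; lia). rewrite H0 in P.
    unfold upd in P. rewrite Nat.eqb_refl in P. fold H in P.
    destruct (Rlt_dec 0 (H + (x - h k))); [|lra].
    destruct (Rlt_dec 0 H); [|lra].
    replace (x + (H - h k)) with (H + (x - h k)) by ring. 
    replace (H - h k + x) with (H + (x - h k)) by ring. exact P. }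
  assert (Hck : forall k, (k < n)%nat -> c k = Rw / H + (- (Rw / H^2) - gam) * h k).
  { intros k Hk. specialize (Hfoc k Hk). field_simplify_eq; [|lra].
    field_simplify_eq in Hfoc; [|lra]. lra. }
  assert (HC : sumR n c = INR n * (Rw / H) + (- (Rw / H^2) - gam) * H).
  { rewrite (sumR_ext n c (fun k => Rw / H + (- (Rw / H^2) - gam) * h k)) by auto.
    rewrite sumR_affine. rewrite <- HsN. reflexivity. }
  assert (HCH : sumR n c * H = (INR n - 1) * Rw - gam * H^2).
  { rewrite HC. field. lra. }
  assert (HCp : 0 < sumR n c).
  { assert (c 0%nat <= sumR n c) by (apply sumR_ge; [intros; apply Rlt_le, Hcp; lia | lia]). lra. }
  split; [exact HH|]. split; [|split; [|exact HCH]].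
  - intros k Hk. specialize (Hfoc k Hk). field_simplify_eq in Hfoc; [|lra]. nra.
  - unfold gcf. destruct (Req_EM_T gam 0) as [e|e].
    + subst gam. field_simplify_eq; [|lra]. lra.
    + set (C := sumR n c) in *.
      rewrite (sqrt_lem_1 _ (2 * gam * H + C)).
      * field. auto.
      * assert (INR n >= 2). { replace 2 with (INR 2) by (simpl; lra). apply Rle_ge, le_INR; lia. }
        assert (0 <= (INR n - 1) * Rw * gam) by (apply Rmult_le_pos; [apply Rmult_le_pos|]; lra).
        nra.
      * nra.
      * nra.
Qed.

Lemma dG n gam Rw C H : 0 < C -> 0 <= gam -> 0 < Rw -> 0 < H -> (2 <= n)%nat ->
  gcf n gam Rw C = H -> C * H = (INR n - 1) * Rw - gam * H^2 ->
  is_derive (gcf n gam Rw) C (- H / (2 * gam * H + C)).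
Proof.
  intros HC Hg HR HH Hn HG HCH.
  assert (INR n >= 2). { replace 2 with (INR 2) by (simpl; lra). apply Rle_ge, le_INR; lia. }
  unfold gcf in *. destruct (Req_EM_T gam 0) as [e|e].
  - subst gam. rewrite <- HG. auto_derive. lra. field. lra.
  - assert (Hs : sqrt (C ^ 2 + 4 * (INR n - 1) * Rw * gam) = 2 * gam * H + C).
    { apply sqrt_lem_1. 
      assert (0 <= (INR n - 1) * Rw * gam) by (apply Rmult_le_pos; [apply Rmult_le_pos|]; lra).
      nra. nra. nra. }
    assert (0 < gam) by lra.
    auto_derive.
    + rewrite <- (Rmult_1_r C) at 1. simpl. 
      assert (0 <= (INR n - 1) * Rw * gam) by (apply Rmult_le_pos; [apply Rmult_le_pos|]; lra).
      nra.
    + replace (C * (C * 1) + 4 * (INR n - 1) * Rw * gam) with (C ^ 2 + 4 * (INR n - 1) * Rw * gam) by ring.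
      rewrite Hs. field. split; nra.
Qed.

Lemma comp_lin (G : R -> R) (C ck Gp : R) : is_derive G C Gp -> is_derive (fun t => G (C + (t - ck))) ck Gp.
Proof.
  intros HG.
  assert (E : is_derive (fun t => C + (t - ck)) ck 1) by (auto_derive; auto; ring).
  assert (HG' : is_derive G (C + (ck - ck)) Gp) by (replace (C + (ck - ck)) with C by ring; exact HG).
  assert (D := is_derive_comp G (fun t => C + (t - ck)) ck Gp 1 HG' E).
  change (scal (1:R) Gp) with (1 * Gp) in D. rewrite Rmult_1_l in D. exact D.
Qed.

Section Chain.
Variables (K : R -> R) (a x Kp gam Rw : R).
Hypothesis HK : is_derive K a Kp.
Hypothesis HKa : K a = x.
Hypothesis Hden : 0 < Rw + gam * x ^ 2.
Hypothesis Hx : 0 < x.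

Let exK : ex_derive K a := ex_intro _ Kp HK.
Let DK : Derive (fun y => K y) a = Kp := is_derive_unique _ _ _ HK.

Lemma chA : is_derive (fun t => fcf t gam Rw (K t)) a
  (- x^2 / (Rw + gam * x^2) + Rw * (Rw - gam * x^2 - 2 * a * x) / (Rw + gam * x^2)^2 * Kp).
Proof.
  unfold fcf. auto_derive.
  - rewrite HKa. repeat split; auto. nra.
  - rewrite DK, HKa. field. lra.
Qed.

Lemma chB ci : is_derive (fun t => fcf ci gam Rw (K t)) a
  (Rw * (Rw - gam * x^2 - 2 * ci * x) / (Rw + gam * x^2)^2 * Kp).
Proof.
  unfold fcf. auto_derive.
  - rewrite HKa. repeat split; auto. nra.
  - rewrite DK, HKa. field. lra.
Qed.

Lemma chC : is_derive (fun t => fcf t gam Rw (K t) / K t) a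
  (- x / (Rw + gam * x^2) + (- a * Rw + a * gam * x^2 - 2 * Rw * gam * x) / (Rw + gam * x^2)^2 * Kp).
Proof.
  unfold fcf. auto_derive.
  - rewrite HKa. repeat split; auto; nra.
  - rewrite DK, HKa. field. lra.
Qed.

Lemma chD ci : is_derive (fun t => fcf ci gam Rw (K t) / K t) a
  ((- ci * Rw + ci * gam * x^2 - 2 * Rw * gam * x) / (Rw + gam * x^2)^2 * Kp).
Proof.
  unfold fcf. auto_derive.
  - rewrite HKa. repeat split; auto; nra.
  - rewrite DK, HKa. field. lra.
Qed.
End Chain.

Section Signs.
Variables (x C a g Rw : R).
Hypotheses (Hx : 0 < x) (HR : 0 < Rw) (Hg : 0 <= g) (Hax : 0 < Rw - a * x) (HaC : a < C) (Ha : 0 < a).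

Let d := Rw + g * x^2.
Let S := 2 * g * x + C.
Let Hd : 0 < d. Proof. unfold d. nra. Qed.
Let HS : 0 < S. Proof. unfold S. nra. Qed.

Lemma frac_pos p q : 0 < p -> 0 < q -> 0 < p / q.
Proof. intros. apply Rdiv_lt_0_compat; auto. Qed.

Lemma sgn1 : - x^2 / (Rw + g * x^2) + Rw * (Rw - g * x^2 - 2 * a * x) / (Rw + g * x^2)^2 * (- x / (2 * g * x + C)) < 0.
Proof.
  pose proof Hd; pose proof HS. fold d S.
  assert (E : - x^2 / d + Rw * (Rw - g * x^2 - 2 * a * x) / d^2 * (- x / S) =
     - (x * (Rw * g * x^2 + 2 * g^2 * x^4 + g * C * x^3 + Rw * ((Rw - a * x) + (C - a) * x))) / (d^2 * S)).
  { unfold d, S in *. field. lra. }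
  rewrite E.
  assert (0 < x * (Rw * g * x^2 + 2 * g^2 * x^4 + g * C * x^3 + Rw * ((Rw - a * x) + (C - a) * x)) / (d^2 * S)).
  { pose proof Hd; pose proof HS. apply frac_pos; [|apply Rmult_lt_0_compat; [apply pow_lt|]; auto]. apply Rmult_lt_0_compat; auto.
    assert (0 <= Rw * g * x^2) by (apply Rmult_le_pos; [nra| nra]).
    assert (0 <= 2 * g^2 * x^4) by nra.
    assert (0 <= g * C * x^3) by (apply Rmult_le_pos; [nra|nra]).
    assert (0 < Rw * ((Rw - a * x) + (C - a) * x)) by (apply Rmult_lt_0_compat; nra). lra. }
  unfold Rdiv in *. lra.
Qed.

Lemma sgn1b : - x^2 / (Rw + g * x^2) + Rw * (Rw - g * x^2 - 2 * a * x) / (Rw + g * x^2)^2 * 0 < 0.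
Proof.
  pose proof Hd. fold d. rewrite Rmult_0_r, Rplus_0_r. assert (0 < x^2 / d) by (apply frac_pos; nra).
  unfold Rdiv in *. lra.
Qed.

Lemma sgn2 : 0 < Rw * (Rw - g * x^2 - 2 * a * x) / (Rw + g * x^2)^2 * (- x / (2 * g * x + C))
  <-> (Rw - a * x) / (Rw + g * x^2) < 1 / 2.
Proof.
  pose proof Hd; pose proof HS.
  assert (HdS : 0 < d^2 * S) by (apply Rmult_lt_0_compat; [apply pow_lt|]; auto).
  fold d S.
  set (E := Rw - g * x^2 - 2 * a * x).
  assert (E1 : Rw * E / d^2 * (- x / S) = - ((Rw * x / (d^2 * S)) * E)).
  { field. split; lra. }
  rewrite E1.
  assert (P : 0 < Rw * x / (d^2 * S)) by (apply frac_pos; nra).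
  assert (E2 : (Rw - a * x) / d = 1/2 + E / (2 * d)).
  { unfold E. unfold d in *. field. lra. }
  rewrite E2.
  assert (Q : 0 < / (2 * d)) by (apply Rinv_0_lt_compat; lra).
  unfold Rdiv at 2. 
  split; intro Hh.
  - assert (E < 0) by nra. nra.
  - assert (E < 0) by nra. nra.
Qed.

Lemma sgn3 : 0 < (- a * Rw + a * g * x^2 - 2 * Rw * g * x) / (Rw + g * x^2)^2 * (- x / (2 * g * x + C)).
Proof.
  pose proof Hd; pose proof HS. fold d S.
  assert (HdS : 0 < d^2 * S) by (apply Rmult_lt_0_compat; [apply pow_lt|]; auto).
  assert (E1 : (- a * Rw + a * g * x^2 - 2 * Rw * g * x) / d^2 * (- x / S) =
     x * (a * Rw + g * x * (Rw - a * x) + Rw * g * x) / (d^2 * S)).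
  { field. split; lra. }
  rewrite E1. apply frac_pos; auto.
  apply Rmult_lt_0_compat; auto.
  assert (0 <= g * x * (Rw - a * x)) by (apply Rmult_le_pos; nra).
  assert (0 <= Rw * g * x) by (apply Rmult_le_pos; nra).
  nra.
Qed.

Lemma sgn4 : - x / (Rw + g * x^2) + (- a * Rw + a * g * x^2 - 2 * Rw * g * x) / (Rw + g * x^2)^2 * 0 < 0.
Proof.
  pose proof Hd. fold d. rewrite Rmult_0_r, Rplus_0_r. assert (0 < x / d) by (apply frac_pos; nra).
  unfold Rdiv in *. lra.
Qed.

Lemma sgn5 : - x / (Rw + g * x^2) + (- a * Rw + a * g * x^2 - 2 * Rw * g * x) / (Rw + g * x^2)^2 * (- x / (2 * g * x + C)) < 0.
Proof.
  pose proof Hd; pose proof HS. fold d S.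
  assert (HdS : 0 < d^2 * S) by (apply Rmult_lt_0_compat; [apply pow_lt|]; auto).
  assert (E1 : - x / d + (- a * Rw + a * g * x^2 - 2 * Rw * g * x) / d^2 * (- x / S) =
     - (x * (Rw * (C - a) + g * x^2 * (2 * g * x + C + a)) / (d^2 * S))).
  { unfold d, S in *. field. split; lra. }
  rewrite E1.
  assert (0 < x * (Rw * (C - a) + g * x^2 * (2 * g * x + C + a)) / (d^2 * S)); [|lra].
  apply frac_pos; auto. apply Rmult_lt_0_compat; auto.
  assert (0 <= g * x^2 * (2 * g * x + C + a)) by (apply Rmult_le_pos; [nra|nra]).
  nra.
Qed.
End Signs.

Lemma is_derive_eqv (f : R -> R) (x l l' : R) : is_derive f x l -> l = l' -> is_derive f x l'.
Proof. intros; subst; auto. Qed.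

Theorem proposition4p5 (N n : nat) (c : nat -> R) (Rw gam : R) (h : nat -> R)
  (i j : nat) :
  (2 <= N)%nat ->
  0 < c 0%nat ->
  (forall k, (S k < N)%nat -> c k <= c (S k)) ->
  0 < Rw -> 0 <= gam ->
  is_NE N c Rw gam h ->
  (2 <= n <= N)%nat ->
  (forall k, (k < N)%nat -> (0 < h k <-> (k < n)%nat)) ->
  (i < n)%nat -> (j < n)%nat -> i <> j ->
  let D1 := Delta1 n gam Rw c i in
  let D2 := Delta2 n gam Rw c i in
  let D1t := Delta1t n gam Rw c i in
  let D2t := Delta2t n gam Rw c i in
  (is_derive (fun t => hstar n gam Rw (upd c i t) i) (c i) (D1 + D2)
   /\ D1 + D2 < 0
   /\ is_derive (fun t => hstar n gam Rw (upd c j t) i) (c j) D2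
   /\ D1 < 0
   /\ (0 < D2 <-> h i / sumR N h < 1 / 2))
  /\
  (is_derive (fun t => hstar n gam Rw (upd c i t) i / Hstar n gam Rw (upd c i t))
      (c i) (D1t + D2t)
   /\ D1t + D2t < 0
   /\ is_derive (fun t => hstar n gam Rw (upd c j t) i / Hstar n gam Rw (upd c j t))
      (c j) D2t
   /\ 0 < D2t
   /\ D1t < 0).
Proof.
  intros HN Hc0 Hmono HR Hg HNE Hn Hact Hi Hj Hij.
  cbv zeta.
  destruct (ne_facts N n c Rw gam h HN Hc0 Hmono HR Hg HNE Hn Hact) as [HH [Hh [HG HCH]]].
  set (H := sumR N h) in *. set (C := sumR n c) in *.
  assert (Hcp := cpos N c Hc0 Hmono).
  assert (Hci : 0 < c i) by (apply Hcp; lia).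
  assert (Hcj : 0 < c j) by (apply Hcp; lia).
  assert (HCij : c i + c j <= C) by (apply sumR_ge2; auto; try lia; intros; apply Rlt_le, Hcp; lia).
  assert (HCp : 0 < C) by lra.
  assert (Hden : 0 < Rw + gam * H^2) by nra.
  assert (HS : 0 < 2 * gam * H + C) by nra.
  assert (Hhi : 0 < h i) by (apply Hact; lia).
  assert (Hri : 0 < Rw - c i * H).
  { specialize (Hh i Hi). nra. }
  assert (HaC : c i < C) by lra.
  assert (dGC := dG n gam Rw C H HCp Hg HR HH ltac:(lia) HG HCH).
  assert (HstarC : Hstar n gam Rw c = H) by exact HG.
  assert (Hupd : forall k t, (k < n)%nat -> Hstar n gam Rw (upd c k t) = gcf n gam Rw (C + (t - c k))).
  { intros k t Hk. unfold Hstar. rewrite sumR_upd. 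
    assert (Nat.ltb k n = true) by (apply Nat.ltb_lt; lia). rewrite H0. reflexivity. }
  assert (dK : forall k, (k < n)%nat -> is_derive (fun t => Hstar n gam Rw (upd c k t)) (c k) (- H / (2 * gam * H + C))).
  { intros k Hk. eapply is_derive_ext. intros t. symmetry. apply Hupd; auto.
    apply comp_lin. exact dGC. }
  assert (Kv : forall k, (k < n)%nat -> Hstar n gam Rw (upd c k (c k)) = H).
  { intros k Hk. rewrite Hupd by auto. replace (C + (c k - c k)) with C by ring. exact HG. }
  assert (dgv : forall k, (k < n)%nat -> dg n gam Rw c k = - H / (2 * gam * H + C)).
  { intros k Hk. unfold dg. apply is_derive_unique. apply dK; auto. }
  assert (E1 : Delta1 n gam Rw c i = - H^2 / (Rw + gam * H^2) + Rw * (Rw - gam * H^2 - 2 * c i * H) / (Rw + gam * H^2)^2 * 0).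
  { unfold Delta1. rewrite HstarC. apply is_derive_unique.
    apply (chA (fun _ => H) (c i) H 0 gam Rw); auto. auto_derive; auto. }
  assert (E2 : Delta2 n gam Rw c i = Rw * (Rw - gam * H^2 - 2 * c i * H) / (Rw + gam * H^2)^2 * (- H / (2 * gam * H + C))).
  { unfold Delta2. rewrite HstarC, dgv by auto. f_equal.
    replace (Rw * (Rw - gam * H ^ 2 - 2 * c i * H) / (Rw + gam * H ^ 2) ^ 2) with
      (Rw * (Rw - gam * H ^ 2 - 2 * c i * H) / (Rw + gam * H ^ 2) ^ 2 * 1) by ring.
    apply is_derive_unique.
    apply (chB (fun y => y) H H 1 gam Rw); auto. auto_derive; auto. }
  assert (E3 : Delta1t n gam Rw c i = - H / (Rw + gam * H^2) + (- c i * Rw + c i * gam * H^2 - 2 * Rw * gam * H) / (Rw + gam * H^2)^2 * 0).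
  { unfold Delta1t. rewrite HstarC. apply is_derive_unique.
    apply (chC (fun _ => H) (c i) H 0 gam Rw); auto. auto_derive; auto. }
  assert (E4 : Delta2t n gam Rw c i = (- c i * Rw + c i * gam * H^2 - 2 * Rw * gam * H) / (Rw + gam * H^2)^2 * (- H / (2 * gam * H + C))).
  { unfold Delta2t. rewrite HstarC, dgv by auto. f_equal.
    replace ((- c i * Rw + c i * gam * H^2 - 2 * Rw * gam * H) / (Rw + gam * H^2)^2) with
      ((- c i * Rw + c i * gam * H^2 - 2 * Rw * gam * H) / (Rw + gam * H^2)^2 * 1) by ring.
    apply is_derive_unique.
    apply (chD (fun y => y) H H 1 gam Rw); auto. auto_derive; auto. }
  assert (Fi : forall t, hstar n gam Rw (upd c i t) i = fcf t gam Rw (Hstar n gam Rw (upd c i t))).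
  { intros t. unfold hstar. unfold upd at 1. rewrite Nat.eqb_refl. reflexivity. }
  assert (Fj : forall t, hstar n gam Rw (upd c j t) i = fcf (c i) gam Rw (Hstar n gam Rw (upd c j t))).
  { intros t. unfold hstar. unfold upd at 1. 
    assert (Nat.eqb i j = false) by (apply Nat.eqb_neq; auto). rewrite H0. reflexivity. }
  rewrite E1, E2, E3, E4.
  split; [split; [|split; [|split; [|split]]] | split; [|split; [|split; [|split]]]].
  - eapply is_derive_ext. intros t; symmetry; apply Fi.
    eapply is_derive_eqv. apply (chA _ (c i) H _ gam Rw (dK i Hi) (Kv i Hi) Hden). ring.
  - rewrite Rmult_0_r, Rplus_0_r. apply sgn1; auto.
  - eapply is_derive_ext. intros t; symmetry; apply Fj.
    apply (chB _ (c j) H _ gam Rw (dK j Hj) (Kv j Hj) Hden).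
  - apply sgn1b; auto.
  - replace (h i / H) with ((Rw - c i * H) / (Rw + gam * H^2)).
    + apply sgn2; auto.
    + specialize (Hh i Hi). field_simplify_eq; [|split; lra]. lra.
  - apply (is_derive_ext (fun t => fcf t gam Rw (Hstar n gam Rw (upd c i t)) / Hstar n gam Rw (upd c i t))).
    intros t. rewrite Fi. reflexivity.
    eapply is_derive_eqv. apply (chC _ (c i) H _ gam Rw (dK i Hi) (Kv i Hi) Hden HH). ring.
  - rewrite Rmult_0_r, Rplus_0_r. apply sgn5; auto.
  - apply (is_derive_ext (fun t => fcf (c i) gam Rw (Hstar n gam Rw (upd c j t)) / Hstar n gam Rw (upd c j t))).
    intros t. rewrite Fj. reflexivity.
    apply (chD _ (c j) H _ gam Rw (dK j Hj) (Kv j Hj) Hden HH).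
  - apply sgn3; auto.
  - apply sgn4; auto.
Qed.
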